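(* Let $H$ be a finite dimensional Hopf algebra over a field $\mathbb{K}$ with coproduct $\Delta(x)=x_{(1)}\otimes x_{(2)}$ (Sweedler notation), counit $\epsilon$ and antipode $S$. Let $\mu_R\in H^*$ be a right integral and $e_R\in H$ a right cointegral, normalized so that $\mu_R(e_R)=1$. Put $a=\mu_R(e_{R(2)})\,e_{R(1)}\in H$, $\alpha=\mu_R(\,\cdot\,e_R)\in H^*$ (i.e. $\alpha(x)=\mu_R(xe_R)$), $q=\alpha(a)\in\mathbb{K}$, $e_L=S^{-1}(e_R)$ and $\mu_L=\mu_R\circ S$. Then $$S(e_R)=q\,e_L\qquad\text{and}\qquad \mu_L(e_R)=q.$$
   Context: A right integral of $H$ is an element $\mu_R\in H^*$ with $\mu_R(x_{(1)})x_{(2)}=\mu_R(x)1_H$ for all $x\in H$; a right cointegral is an element $e_R\in H$ with $e_Rx=\epsilon(x)e_R$ for all $x\in H$. For a finite dimensional Hopf algebra nonzero such elements exist, are unique up to scalars, and can be chosen with $\mu_R(e_R)=1$; the antipode is invertible. *)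

(* Defs.v *)
(* A finite dimensional Hopf algebra over a field K, of
   dimension n, presented by structure constants in a fixed basis e_0..e_{n-1}.
   Elements of H are row vectors 'rV[K]_n; elements of H (x) H are n x n
   matrices (entry (j,k) = coefficient of e_j (x) e_k); elements of H^* are
   column vectors 'cV[K]_n (entry i = value on e_i). *)
From HB Require Import structures.
From mathcomp Require Import all_boot all_order all_algebra.
Set Implicit Arguments. Unset Strict Implicit. Unset Printing Implicit Defensive.
Import GRing.Theory.
Local Open Scope ring_scope.

Record hopf_data (K : fieldType) (n : nat) := HopfData {
  hm : 'I_n -> 'I_n -> 'rV[K]_n;   (* e_i * e_j *)
  hu : 'rV[K]_n;
  hD : 'I_n -> 'M[K]_n;            (* coproduct Delta(e_i) in H (x) H *)
  heps : 'I_n -> K;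
  hS : 'M[K]_n                     (* antipode: S x = x *m hS *)
}.

Definition bvec (K : fieldType) (n : nat) (i : 'I_n) : 'rV[K]_n := delta_mx 0 i.

Definition hmul K n (A : hopf_data K n) (x y : 'rV[K]_n) : 'rV[K]_n :=
  \sum_i \sum_j (x 0 i * y 0 j) *: hm A i j.
Definition hcomul K n (A : hopf_data K n) (x : 'rV[K]_n) : 'M[K]_n :=
  \sum_i x 0 i *: hD A i.
Definition hcounit K n (A : hopf_data K n) (x : 'rV[K]_n) : K :=
  \sum_i x 0 i * heps A i.
Definition hanti K n (A : hopf_data K n) (x : 'rV[K]_n) : 'rV[K]_n := x *m hS A.
(* S^{-1} (the antipode of a finite dimensional Hopf algebra is invertible) *)
Definition hantiinv K n (A : hopf_data K n) (x : 'rV[K]_n) : 'rV[K]_n :=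
  x *m invmx (hS A).

Definition tens (K : fieldType) n (x y : 'rV[K]_n) : 'M[K]_n := x^T *m y.

Definition tmul K n (A : hopf_data K n) (P Q : 'M[K]_n) : 'M[K]_n :=
  \sum_i \sum_j \sum_k \sum_l (P i j * Q k l) *:
     tens (hmul A (bvec K i) (bvec K k)) (hmul A (bvec K j) (bvec K l)).

Definition ev (K : fieldType) n (phi : 'cV[K]_n) (x : 'rV[K]_n) : K := (x *m phi) 0 0.

Definition contr_l (K : fieldType) n (phi : 'cV[K]_n) (P : 'M[K]_n) : 'rV[K]_n :=
  \sum_j \sum_k (P j k * ev phi (bvec K j)) *: bvec K k.
Definition contr_r (K : fieldType) n (phi : 'cV[K]_n) (P : 'M[K]_n) : 'rV[K]_n :=
  \sum_j \sum_k (P j k * ev phi (bvec K k)) *: bvec K j.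

Definition is_hopf K n (A : hopf_data K n) : Prop :=
  (forall x y z, hmul A (hmul A x y) z = hmul A x (hmul A y z)) /\
      (forall x, hmul A (hu A) x = x /\ hmul A x (hu A) = x) /\
      (* coassociativity, coefficientwise on e_i (x) e_j (x) e_k *)
      (forall x i j k,
         \sum_a hcomul A x a k * hcomul A (bvec K a) i j
         = \sum_b hcomul A x i b * hcomul A (bvec K b) j k) /\
      (forall x,
         \sum_j \sum_k (hcomul A x j k * hcounit A (bvec K j)) *: bvec K k = x
      /\ \sum_j \sum_k (hcomul A x j k * hcounit A (bvec K k)) *: bvec K j = x) /\
      ((forall x y, hcomul A (hmul A x y) = tmul A (hcomul A x) (hcomul A y))
      /\ hcomul A (hu A) = tens (hu A) (hu A)) /\
      ((forall x y, hcounit A (hmul A x y) = hcounit A x * hcounit A y)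
      /\ hcounit A (hu A) = 1) /\
      (forall x,
         \sum_j \sum_k hcomul A x j k *: hmul A (hanti A (bvec K j)) (bvec K k)
           = hcounit A x *: hu A
      /\ \sum_j \sum_k hcomul A x j k *: hmul A (bvec K j) (hanti A (bvec K k))
           = hcounit A x *: hu A).

Definition is_right_integral K n (A : hopf_data K n) (mu : 'cV[K]_n) : Prop :=
  forall x, contr_l mu (hcomul A x) = ev mu x *: hu A.

Definition is_right_cointegral K n (A : hopf_data K n) (e : 'rV[K]_n) : Prop :=
  forall x, hmul A e x = hcounit A x *: e.

(* Main.v *)
Require Import Defs.
From mathcomp Require Import all_boot all_order all_algebra.
Set Implicit Arguments. Unset Strict Implicit. Unset Printing Implicit Defensive.
Import GRing.Theory.
Local Open Scope ring_scope.

Lemma bvecE (K : fieldType) n (i j : 'I_n) : bvec K i 0 j = (i == j)%:R.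
Proof. by rewrite /bvec mxE eqxx eq_sym. Qed.

Lemma sum_delta (K : fieldType) (W : lmodType K) n (i0 : 'I_n) (F : 'I_n -> W) :
  \sum_i (i0 == i)%:R *: F i = F i0.
Proof.
rewrite (bigD1 i0) //= eqxx scale1r big1 ?addr0 // => i /negbTE.
by rewrite eq_sym => ->; rewrite scale0r.
Qed.

Lemma sum_deltaK (K : fieldType) n (i0 : 'I_n) (F : 'I_n -> K) :
  \sum_i (i0 == i)%:R * F i = F i0.
Proof.
rewrite (bigD1 i0) //= eqxx mul1r big1 ?addr0 // => i /negbTE.
by rewrite eq_sym => ->; rewrite mul0r.
Qed.

Lemma rowE (K : fieldType) n (x : 'rV[K]_n) : x = \sum_i x 0 i *: bvec K i.
Proof. exact: row_sum_delta. Qed.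

Definition islin (K : fieldType) n (W : lmodType K) (f : 'rV[K]_n -> W) :=
  forall x, f x = \sum_i x 0 i *: f (bvec K i).
Definition islinK (K : fieldType) n (f : 'rV[K]_n -> K) :=
  forall x, f x = \sum_i x 0 i * f (bvec K i).

Lemma lin_sum (K : fieldType) n (W : lmodType K) (f : 'rV[K]_n -> W) :
  islin f -> forall (I : Type) (r : seq I) (P : pred I) (F : I -> 'rV[K]_n),
  f (\sum_(j <- r | P j) F j) = \sum_(j <- r | P j) f (F j).
Proof.
move=> Hf I r P F; rewrite Hf.
under eq_bigr do rewrite summxE scaler_suml.
rewrite exchange_big; apply: eq_bigr => j _; by rewrite [RHS]Hf.
Qed.

Lemma lin_scale (K : fieldType) n (W : lmodType K) (f : 'rV[K]_n -> W) :
  islin f -> forall a x, f (a *: x) = a *: f x.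
Proof.
move=> Hf a x; rewrite Hf [in RHS]Hf scaler_sumr; apply: eq_bigr => i _.
by rewrite mxE scalerA.
Qed.

Lemma lin_add (K : fieldType) n (W : lmodType K) (f : 'rV[K]_n -> W) :
  islin f -> forall x y, f (x + y) = f x + f y.
Proof.
move=> Hf x y; rewrite Hf [f x]Hf [f y]Hf -big_split; apply: eq_bigr => i _.
by rewrite mxE scalerDl.
Qed.

Lemma linK_sum (K : fieldType) n (f : 'rV[K]_n -> K) :
  islinK f -> forall (I : Type) (r : seq I) (P : pred I) (F : I -> 'rV[K]_n),
  f (\sum_(j <- r | P j) F j) = \sum_(j <- r | P j) f (F j).
Proof.
move=> Hf I r P F; rewrite Hf.
under eq_bigr do rewrite summxE big_distrl.
rewrite exchange_big; apply: eq_bigr => j _; by rewrite [RHS]Hf.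
Qed.

Lemma linK_scale (K : fieldType) n (f : 'rV[K]_n -> K) :
  islinK f -> forall a x, f (a *: x) = a * f x.
Proof.
move=> Hf a x; rewrite Hf [in RHS]Hf big_distrr; apply: eq_bigr => i _.
by rewrite mxE -mulrA.
Qed.

Lemma linK_add (K : fieldType) n (f : 'rV[K]_n -> K) :
  islinK f -> forall x y, f (x + y) = f x + f y.
Proof.
move=> Hf x y; rewrite Hf [f x]Hf [f y]Hf -big_split; apply: eq_bigr => i _.
by rewrite mxE mulrDl.
Qed.

Lemma hmul_bl (K : fieldType) n (A : hopf_data K n) i y :
  hmul A (bvec K i) y = \sum_j y 0 j *: hm A i j.
Proof.
rewrite /hmul; under eq_bigr => i' _ do under eq_bigr => j _ do
  rewrite bvecE -scalerA.
under eq_bigr do rewrite -scaler_sumr.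
by rewrite sum_delta.
Qed.

Lemma hmul_br (K : fieldType) n (A : hopf_data K n) x j :
  hmul A x (bvec K j) = \sum_i x 0 i *: hm A i j.
Proof.
rewrite /hmul; apply: eq_bigr => i _.
under eq_bigr => j' _ do rewrite bvecE mulrC -scalerA.
by rewrite sum_delta.
Qed.

Lemma hmul_bb (K : fieldType) n (A : hopf_data K n) i j :
  hmul A (bvec K i) (bvec K j) = hm A i j.
Proof.
rewrite hmul_bl; under eq_bigr do rewrite bvecE.
by rewrite sum_delta.
Qed.

Lemma lin_hmull (K : fieldType) n (A : hopf_data K n) y :
  islin (fun x => hmul A x y).
Proof.
move=> x /=; under [RHS]eq_bigr do rewrite hmul_bl.
rewrite /hmul; apply: eq_bigr => i _.
rewrite scaler_sumr; apply: eq_bigr => j _; by rewrite scalerA.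
Qed.

Lemma lin_hmulr (K : fieldType) n (A : hopf_data K n) x :
  islin (hmul A x).
Proof.
move=> y /=; under [RHS]eq_bigr do rewrite hmul_br.
rewrite /hmul exchange_big; apply: eq_bigr => j _.
rewrite scaler_sumr; apply: eq_bigr => i _; by rewrite scalerA mulrC.
Qed.

Lemma hcomul_b (K : fieldType) n (A : hopf_data K n) i :
  hcomul A (bvec K i) = hD A i.
Proof. rewrite /hcomul; under eq_bigr do rewrite bvecE; exact: sum_delta. Qed.

Lemma lin_hcomul (K : fieldType) n (A : hopf_data K n) : islin (hcomul A).
Proof. move=> x; under [RHS]eq_bigr do rewrite hcomul_b; by []. Qed.

Lemma hcounit_b (K : fieldType) n (A : hopf_data K n) i :
  hcounit A (bvec K i) = heps A i.
Proof. rewrite /hcounit; under eq_bigr do rewrite bvecE; exact: sum_deltaK. Qed.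

Lemma lin_hcounit (K : fieldType) n (A : hopf_data K n) : islinK (hcounit A).
Proof. move=> x; under [RHS]eq_bigr do rewrite hcounit_b; by []. Qed.

Lemma lin_hanti (K : fieldType) n (A : hopf_data K n) : islin (hanti A).
Proof.
move=> x; rewrite /hanti {1}(rowE x) mulmx_suml; apply: eq_bigr => i _.
by rewrite scalemxAl.
Qed.

Lemma lin_ev (K : fieldType) n (phi : 'cV[K]_n) : islinK (ev phi).
Proof.
move=> x; rewrite /ev {1}(rowE x) mulmx_suml summxE; apply: eq_bigr => i _.
by rewrite -scalemxAl mxE.
Qed.


Lemma hmul_suml (K : fieldType) n (A : hopf_data K n) y (I : Type) (r : seq I) (P : pred I) F :
  hmul A (\sum_(j <- r | P j) F j) y = \sum_(j <- r | P j) hmul A (F j) y.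
Proof. exact: (lin_sum (lin_hmull A y)). Qed.
Lemma hmul_sumr (K : fieldType) n (A : hopf_data K n) x (I : Type) (r : seq I) (P : pred I) F :
  hmul A x (\sum_(j <- r | P j) F j) = \sum_(j <- r | P j) hmul A x (F j).
Proof. exact: (lin_sum (lin_hmulr A x)). Qed.
Lemma hmulZl (K : fieldType) n (A : hopf_data K n) a x y :
  hmul A (a *: x) y = a *: hmul A x y.
Proof. exact: (lin_scale (lin_hmull A y)). Qed.
Lemma hmulZr (K : fieldType) n (A : hopf_data K n) a x y :
  hmul A x (a *: y) = a *: hmul A x y.
Proof. exact: (lin_scale (lin_hmulr A x)). Qed.
Lemma hmulDl (K : fieldType) n (A : hopf_data K n) x z y :
  hmul A (x + z) y = hmul A x y + hmul A z y.
Proof. exact: (lin_add (lin_hmull A y)). Qed.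
Lemma hmulDr (K : fieldType) n (A : hopf_data K n) x z y :
  hmul A y (x + z) = hmul A y x + hmul A y z.
Proof. exact: (lin_add (lin_hmulr A y)). Qed.
Lemma hcomul_sum (K : fieldType) n (A : hopf_data K n) (I : Type) (r : seq I) (P : pred I) F :
  hcomul A (\sum_(j <- r | P j) F j) = \sum_(j <- r | P j) hcomul A (F j).
Proof. exact: (lin_sum (lin_hcomul A)). Qed.
Lemma hcomulZ (K : fieldType) n (A : hopf_data K n) a x :
  hcomul A (a *: x) = a *: hcomul A x.
Proof. exact: (lin_scale (lin_hcomul A)). Qed.
Lemma hanti_sum (K : fieldType) n (A : hopf_data K n) (I : Type) (r : seq I) (P : pred I) F :
  hanti A (\sum_(j <- r | P j) F j) = \sum_(j <- r | P j) hanti A (F j).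
Proof. exact: (lin_sum (lin_hanti A)). Qed.
Lemma hantiZ (K : fieldType) n (A : hopf_data K n) a x :
  hanti A (a *: x) = a *: hanti A x.
Proof. exact: (lin_scale (lin_hanti A)). Qed.
Lemma ev_sum (K : fieldType) n (phi : 'cV[K]_n) (I : Type) (r : seq I) (P : pred I) F :
  ev phi (\sum_(j <- r | P j) F j) = \sum_(j <- r | P j) ev phi (F j).
Proof. exact: (linK_sum (lin_ev phi)). Qed.
Lemma evZ (K : fieldType) n (phi : 'cV[K]_n) a x : ev phi (a *: x) = a * ev phi x.
Proof. exact: (linK_scale (lin_ev phi)). Qed.
Lemma evD (K : fieldType) n (phi : 'cV[K]_n) x y : ev phi (x + y) = ev phi x + ev phi y.
Proof. exact: (linK_add (lin_ev phi)). Qed.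
Lemma hcounit_sum (K : fieldType) n (A : hopf_data K n) (I : Type) (r : seq I) (P : pred I) F :
  hcounit A (\sum_(j <- r | P j) F j) = \sum_(j <- r | P j) hcounit A (F j).
Proof. exact: (linK_sum (lin_hcounit A)). Qed.
Lemma hcounitZ (K : fieldType) n (A : hopf_data K n) a x :
  hcounit A (a *: x) = a * hcounit A x.
Proof. exact: (linK_scale (lin_hcounit A)). Qed.

Lemma ev0 (K : fieldType) n (phi : 'cV[K]_n) : ev phi 0 = 0.
Proof. by rewrite /ev mul0mx mxE. Qed.
Lemma hmul0l (K : fieldType) n (A : hopf_data K n) y : hmul A 0 y = 0.
Proof. by move: (hmulZl A 0 0 y); rewrite !scale0r. Qed.
Lemma hmul0r (K : fieldType) n (A : hopf_data K n) y : hmul A y 0 = 0.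
Proof. by move: (hmulZr A 0 y 0); rewrite !scale0r. Qed.

Local Notation bv := (bvec _).

Lemma tensE (K : fieldType) n (u v : 'rV[K]_n) j k : tens u v j k = u 0 j * v 0 k.
Proof. by rewrite /tens mxE big_ord1 mxE. Qed.

Lemma contr_l_sum (K : fieldType) n (phi : 'cV[K]_n) (I : Type) (r : seq I) (P : pred I) F :
  contr_l phi (\sum_(i <- r | P i) F i) = \sum_(i <- r | P i) contr_l phi (F i).
Proof.
rewrite /contr_l; under eq_bigr do under eq_bigr do
  rewrite summxE big_distrl scaler_suml.
under eq_bigr do rewrite exchange_big. by rewrite exchange_big.
Qed.
Lemma contr_lZ (K : fieldType) n (phi : 'cV[K]_n) a P :
  contr_l phi (a *: P) = a *: contr_l phi P.
Proof.
rewrite /contr_l scaler_sumr; apply: eq_bigr => j _; rewrite scaler_sumr.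
by apply: eq_bigr => k _; rewrite mxE scalerA mulrA.
Qed.
Lemma contr_r_sum (K : fieldType) n (phi : 'cV[K]_n) (I : Type) (r : seq I) (P : pred I) F :
  contr_r phi (\sum_(i <- r | P i) F i) = \sum_(i <- r | P i) contr_r phi (F i).
Proof.
rewrite /contr_r; under eq_bigr do under eq_bigr do
  rewrite summxE big_distrl scaler_suml.
under eq_bigr do rewrite exchange_big. by rewrite exchange_big.
Qed.
Lemma contr_rZ (K : fieldType) n (phi : 'cV[K]_n) a P :
  contr_r phi (a *: P) = a *: contr_r phi P.
Proof.
rewrite /contr_r scaler_sumr; apply: eq_bigr => j _; rewrite scaler_sumr.
by apply: eq_bigr => k _; rewrite mxE scalerA mulrA.
Qed.
Lemma contr_l_tens (K : fieldType) n (phi : 'cV[K]_n) u v :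
  contr_l phi (tens u v) = ev phi u *: v.
Proof.
rewrite (lin_ev phi u) scaler_suml; apply: eq_bigr => j _.
rewrite {2}(rowE v) scaler_sumr; apply: eq_bigr => k _.
by rewrite tensE scalerA; congr (_ *: _); rewrite mulrAC.
Qed.
Lemma contr_r_tens (K : fieldType) n (phi : 'cV[K]_n) u v :
  contr_r phi (tens u v) = ev phi v *: u.
Proof.
rewrite /contr_r (lin_ev phi v) scaler_suml exchange_big; apply: eq_bigr => k _.
rewrite {2}(rowE u) scaler_sumr; apply: eq_bigr => j _.
by rewrite tensE scalerA; congr (_ *: _); rewrite -mulrA mulrC.
Qed.
Lemma contr_l_tmul (K : fieldType) n (A : hopf_data K n) (phi : 'cV[K]_n) P Q :
  contr_l phi (tmul A P Q) = \sum_i \sum_j \sum_k \sum_l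
    (P i j * Q k l * ev phi (hm A i k)) *: hm A j l.
Proof.
rewrite /tmul contr_l_sum; apply: eq_bigr => i _; rewrite contr_l_sum;
apply: eq_bigr => j _; rewrite contr_l_sum; apply: eq_bigr => k _;
rewrite contr_l_sum; apply: eq_bigr => l _.
by rewrite contr_lZ contr_l_tens !hmul_bb scalerA.
Qed.
Lemma contr_r_tmul (K : fieldType) n (A : hopf_data K n) (phi : 'cV[K]_n) P Q :
  contr_r phi (tmul A P Q) = \sum_i \sum_j \sum_k \sum_l
    (P i j * Q k l * ev phi (hm A j l)) *: hm A i k.
Proof.
rewrite /tmul contr_r_sum; apply: eq_bigr => i _; rewrite contr_r_sum;
apply: eq_bigr => j _; rewrite contr_r_sum; apply: eq_bigr => k _;
rewrite contr_r_sum; apply: eq_bigr => l _.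
by rewrite contr_rZ contr_r_tens !hmul_bb scalerA.
Qed.

Lemma h_assoc (K : fieldType) n (A : hopf_data K n) : is_hopf A ->
  forall x y z, hmul A (hmul A x y) z = hmul A x (hmul A y z).
Proof. by case. Qed.
Lemma h_unitl (K : fieldType) n (A : hopf_data K n) : is_hopf A ->
  forall x, hmul A (hu A) x = x.
Proof. by case=> _ [H _] x; case: (H x). Qed.
Lemma h_unitr (K : fieldType) n (A : hopf_data K n) : is_hopf A ->
  forall x, hmul A x (hu A) = x.
Proof. by case=> _ [H _] x; case: (H x). Qed.
Lemma h_coassoc (K : fieldType) n (A : hopf_data K n) : is_hopf A ->
  forall x i j k, \sum_a hcomul A x a k * hD A a i j
         = \sum_b hcomul A x i b * hD A b j k.
Proof.
case=> _ [_ [H _]] x i j k; move: (H x i j k).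
by under eq_bigr do rewrite hcomul_b; under [in X in _ = X -> _]eq_bigr do rewrite hcomul_b.
Qed.
Lemma h_counitL (K : fieldType) n (A : hopf_data K n) : is_hopf A ->
  forall x, \sum_j \sum_k (hcomul A x j k * heps A j) *: bv k = x.
Proof.
case=> _ [_ [_ [H _]]] x; case: (H x) => E _; rewrite -[RHS]E.
by apply: eq_bigr => j _; apply: eq_bigr => k _; rewrite hcounit_b.
Qed.
Lemma h_counitR (K : fieldType) n (A : hopf_data K n) : is_hopf A ->
  forall x, \sum_j \sum_k (hcomul A x j k * heps A k) *: bv j = x.
Proof.
case=> _ [_ [_ [H _]]] x; case: (H x) => _ E; rewrite -[RHS]E.
by apply: eq_bigr => j _; apply: eq_bigr => k _; rewrite hcounit_b.
Qed.
Lemma h_Dmul (K : fieldType) n (A : hopf_data K n) : is_hopf A ->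
  forall x y, hcomul A (hmul A x y) = tmul A (hcomul A x) (hcomul A y).
Proof. by case=> _ [_ [_ [_ [[H _] _]]]]. Qed.
Lemma h_epsmul (K : fieldType) n (A : hopf_data K n) : is_hopf A ->
  forall x y, hcounit A (hmul A x y) = hcounit A x * hcounit A y.
Proof. by case=> _ [_ [_ [_ [_ [[H _] _]]]]]. Qed.
Lemma h_eps1 (K : fieldType) n (A : hopf_data K n) : is_hopf A ->
  hcounit A (hu A) = 1.
Proof. by case=> _ [_ [_ [_ [_ [[_ H] _]]]]]. Qed.
Lemma h_antiL (K : fieldType) n (A : hopf_data K n) : is_hopf A ->
  forall x, \sum_j \sum_k hcomul A x j k *: hmul A (hanti A (bv j)) (bv k)
           = hcounit A x *: hu A.
Proof. by case=> _ [_ [_ [_ [_ [_ H]]]]] x; case: (H x). Qed.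
Lemma h_antiR (K : fieldType) n (A : hopf_data K n) : is_hopf A ->
  forall x, \sum_j \sum_k hcomul A x j k *: hmul A (bv j) (hanti A (bv k))
           = hcounit A x *: hu A.
Proof. by case=> _ [_ [_ [_ [_ [_ H]]]]] x; case: (H x). Qed.

Ltac ex0 := rewrite [LHS]exchange_big.
Ltac ex1 := under [LHS]eq_bigr => ? _ do rewrite exchange_big.
Ltac ex2 := under [LHS]eq_bigr => ? _ do under eq_bigr => ? _ do rewrite exchange_big.
Ltac ex3 := under [LHS]eq_bigr => ? _ do under eq_bigr => ? _ do under eq_bigr => ? _ do rewrite exchange_big.
Ltac ex4 := under [LHS]eq_bigr => ? _ do under eq_bigr => ? _ do under eq_bigr => ? _ do under eq_bigr => ? _ do rewrite exchange_big.

Lemma star (K : fieldType) n (A : hopf_data K n) (mu : 'cV[K]_n) :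
  is_hopf A -> is_right_integral A mu -> forall x y,
  \sum_j \sum_k (hcomul A x j k * ev mu (hmul A (bv j) y)) *: bv k
  = \sum_j \sum_k (hcomul A y j k * ev mu (hmul A x (bv j))) *: hanti A (bv k).
Proof.
move=> H Hmu x y; symmetry.
transitivity (\sum_j \sum_k hcomul A y j k *:
   hmul A (contr_l mu (hcomul A (hmul A x (bv j)))) (hanti A (bv k))).
  apply: eq_bigr => j _; apply: eq_bigr => k _.
  by rewrite Hmu hmulZl (h_unitl H) scalerA.
transitivity (\sum_j \sum_k \sum_a \sum_c \sum_d \sum_f
   (hcomul A y j k * (hcomul A x a c * hD A j d f * ev mu (hm A a d))) *:
     hmul A (hm A c f) (hanti A (bv k))).
  apply: eq_bigr => j _; apply: eq_bigr => k _.
  rewrite (h_Dmul H) hcomul_b contr_l_tmul hmul_suml scaler_sumr.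
  apply: eq_bigr => a _; rewrite hmul_suml scaler_sumr.
  apply: eq_bigr => c _; rewrite hmul_suml scaler_sumr.
  apply: eq_bigr => d _; rewrite hmul_suml scaler_sumr.
  apply: eq_bigr => f _; by rewrite hmulZl scalerA.
ex0; ex1; ex2; ex3; ex4; ex0; ex1; ex2; ex3.
transitivity (\sum_a \sum_c \sum_d \sum_f \sum_k
   (\sum_j hcomul A y j k * hD A j d f) *:
     ((hcomul A x a c * ev mu (hm A a d)) *: hmul A (hm A c f) (hanti A (bv k)))).
  apply: eq_bigr => a _; apply: eq_bigr => c _; apply: eq_bigr => d _.
  apply: eq_bigr => f _; apply: eq_bigr => k _.
  rewrite scaler_suml; apply: eq_bigr => j _; rewrite scalerA; congr (_ *: _).
  by rewrite mulrA -!mulrA; congr (_ * _); rewrite mulrCA mulrA.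
under [LHS]eq_bigr => a _ do under eq_bigr => c _ do under eq_bigr => d _ do
  under eq_bigr => f _ do under eq_bigr => k _ do
  rewrite (h_coassoc H) scaler_suml.
ex4; ex3.
transitivity (\sum_a \sum_c \sum_d \sum_j
   (hcomul A y d j * heps A j * (hcomul A x a c * ev mu (hm A a d))) *: bv c).
  apply: eq_bigr => a _; apply: eq_bigr => c _; apply: eq_bigr => d _.
  apply: eq_bigr => j _.
  transitivity ((hcomul A y d j * (hcomul A x a c * ev mu (hm A a d))) *:
     hmul A (bv c) (\sum_f \sum_k hcomul A (bv j) f k *: hmul A (bv f) (hanti A (bv k)))).
    rewrite hmul_sumr scaler_sumr; apply: eq_bigr => f _.
    rewrite hmul_sumr scaler_sumr; apply: eq_bigr => k _.
    rewrite hmulZr !scalerA -(h_assoc H) hmul_bb hcomul_b; congr (_ *: _).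
    by rewrite mulrAC.
  rewrite (h_antiR H) hmulZr (h_unitr H) scalerA hcounit_b; congr (_ *: _).
  by rewrite mulrAC.
apply: eq_bigr => a _; apply: eq_bigr => c _.
under eq_bigr do rewrite -scaler_suml. rewrite -scaler_suml.
congr (_ *: _).
rewrite -[in RHS](h_counitR H y) hmul_sumr ev_sum mulr_sumr; apply: eq_bigr => d _.
rewrite hmul_sumr ev_sum mulr_sumr; apply: eq_bigr => j _.
by rewrite hmulZr hmul_bb evZ mulrCA.
Qed.

Lemma coord2 (K : fieldType) n (c : 'I_n -> 'I_n -> K) k :
  (\sum_j \sum_k' c j k' *: bvec K k') 0 k = \sum_j c j k.
Proof.
rewrite summxE; apply: eq_bigr => j _; rewrite summxE.
under eq_bigr do rewrite mxE bvecE mulrC.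
by rewrite (bigD1 k) //= eqxx mul1r big1 ?addr0 // => i /negbTE ->; rewrite mul0r.
Qed.

Lemma nondeg (K : fieldType) n (A : hopf_data K n) (mu : 'cV[K]_n) w :
  is_hopf A -> is_right_integral A mu -> ev mu w != 0 ->
  forall u, (forall h, ev mu (hmul A u h) = 0) -> u = 0.
Proof.
move=> H Hmu Hw.
pose N u := forall h, ev mu (hmul A u h) = 0.
have NR : forall u z, N u -> N (hmul A u z).
  by move=> u z Nu h; rewrite (h_assoc H).
have Nsum : forall (F : 'I_n -> 'rV[K]_n), (forall i, N (F i)) -> N (\sum_i F i).
  by move=> F NF h; rewrite hmul_suml ev_sum big1 // => i _; apply: NF.
have Nleg : forall u, N u -> forall k, N (\sum_j hcomul A u j k *: bv j).
  move=> u Nu k h; rewrite hmul_suml ev_sum.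
  under eq_bigr do rewrite hmulZl evZ.
  have := congr1 (fun v : 'rV[K]_n => v 0 k) (star H Hmu u h) => /=.
  rewrite coord2 => ->; rewrite summxE big1 // => j _.
  rewrite summxE big1 // => k' _; by rewrite Nu mulr0 scale0r mxE.
have Neps : forall u, N u -> hcounit A u = 0.
  move=> u Nu.
  have : N (hcounit A u *: hu A).
    rewrite -(h_antiR H u).
    have -> : \sum_j \sum_k hcomul A u j k *: hmul A (bv j) (hanti A (bv k))
       = \sum_k hmul A (\sum_j hcomul A u j k *: bv j) (hanti A (bv k)).
      rewrite exchange_big; apply: eq_bigr => k _; rewrite hmul_suml.
      by apply: eq_bigr => j _; rewrite hmulZl.
    by apply: Nsum => k; apply: NR; apply: Nleg.
  move/(_ w); rewrite hmulZl (h_unitl H) evZ => /eqP.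
  by rewrite mulf_eq0 (negbTE Hw) orbF => /eqP.
move=> u Nu; rewrite -(h_counitL H u) exchange_big big1 // => k _.
rewrite -scaler_suml.
have := Neps _ (Nleg u Nu k); rewrite hcounit_sum.
under eq_bigr do rewrite hcounitZ hcounit_b.
by move=> ->; rewrite scale0r.
Qed.

Lemma inj_unit (K : fieldType) n (M : 'M[K]_n) :
  (forall v : 'cV[K]_n, M *m v = 0 -> v = 0) -> M \in unitmx.
Proof.
move=> Hinj; rewrite -unitmx_tr -row_free_unit.
have K0 : kermx M^T = 0.
  apply/row_matrixP => i; rewrite row0.
  have := mulmx_ker M^T; move/(congr1 (row i)); rewrite row_mul row0 => E.
  apply: trmx_inj; rewrite trmx0; apply: Hinj.
  by rewrite -[M]trmxK -trmx_mul trmxK E trmx0.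
have := mxrank_ker M^T; rewrite K0 mxrank0 => /esym/eqP; rewrite subn_eq0 => Hle.
by rewrite /row_free eqn_leq rank_leq_row Hle.
Qed.

Lemma ev_col (K : fieldType) n (v : 'cV[K]_n) i : ev v (bvec K i) = v i 0.
Proof.
rewrite /ev mxE; under eq_bigr do rewrite bvecE.
by rewrite sum_deltaK.
Qed.

Lemma S_unit (K : fieldType) n (A : hopf_data K n) (mu : 'cV[K]_n) w :
  is_hopf A -> is_right_integral A mu -> ev mu w != 0 -> hS A \in unitmx.
Proof.
move=> H Hmu Hw; apply: inj_unit => v Hv.
have Hs : forall z, ev v (hanti A z) = 0.
  by move=> z; rewrite /ev /hanti -mulmxA Hv mulmx0 mxE.
have Hx : forall x, ev v x = 0.
  move=> x.
  pose x' := \sum_j \sum_k (hcomul A x j k * ev v (bv k)) *: bvec K j.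
  have Nx : x' = 0.
    apply: (nondeg H Hmu Hw) => y.
    have E0 := congr1 (ev v) (star H Hmu x y).
    have E1 : ev v (\sum_j \sum_k (hcomul A y j k * ev mu (hmul A x (bv j))) *:
                 hanti A (bv k)) = 0.
      rewrite ev_sum big1 // => j _; rewrite ev_sum big1 // => k _.
      by rewrite evZ Hs mulr0.
    rewrite -E1 -E0 /x' hmul_suml ev_sum ev_sum; apply: eq_bigr => j _.
    rewrite hmul_suml ev_sum ev_sum; apply: eq_bigr => k _.
    by rewrite hmulZl !evZ mulrAC.
  have := congr1 (hcounit A) Nx.
  rewrite /x' hcounit_sum (_ : hcounit A 0 = 0); last first.
    by rewrite -(scale0r (0 : 'rV[K]_n)) hcounitZ mul0r.
  move=> E; rewrite -E -[in LHS](h_counitL H x) ev_sum.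
  apply: eq_bigr => j _; rewrite ev_sum hcounit_sum.
  apply: eq_bigr => k _; by rewrite evZ hcounitZ hcounit_b mulrAC.
apply/matrixP => i j; rewrite (ord1 j) mxE -ev_col; exact: Hx.
Qed.

Lemma coint_unique (K : fieldType) n (A : hopf_data K n) (mu : 'cV[K]_n) e :
  is_hopf A -> is_right_integral A mu -> is_right_cointegral A e -> ev mu e = 1 ->
  forall c, is_right_cointegral A c -> c = ev mu c *: e.
Proof.
move=> H Hmu He He1 c Hc; apply/eqP; rewrite -subr_eq0; apply/eqP.
apply: (nondeg (w := e) H Hmu); first by rewrite He1 oner_neq0.
move=> h; rewrite -scaleN1r hmulDl hmulZl hmulZl Hc He evD !evZ He1.
by rewrite mulr1 mulN1r mulrC addrN.
Qed.

Lemma Sform (K : fieldType) n (A : hopf_data K n) (mu : 'cV[K]_n) e :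
  is_hopf A -> is_right_integral A mu -> is_right_cointegral A e -> ev mu e = 1 ->
  forall y, hanti A y =
    \sum_j \sum_k (hcomul A e j k * ev mu (hmul A (bv j) y)) *: bv k.
Proof.
move=> H Hmu He He1 y; rewrite (star H Hmu).
rewrite -[in LHS](h_counitL H y) hanti_sum; apply: eq_bigr => j _.
rewrite hanti_sum; apply: eq_bigr => k _.
by rewrite hantiZ He hcounit_b evZ He1 mulr1.
Qed.

Lemma evalpha (K : fieldType) n (A : hopf_data K n) (mu : 'cV[K]_n) e z :
  ev (\col_i ev mu (hmul A (bvec K i) e)) z = ev mu (hmul A z e).
Proof.
rewrite (lin_ev _ z) [in RHS](rowE z) hmul_suml ev_sum; apply: eq_bigr => i _.
by rewrite ev_col mxE hmulZl evZ.
Qed.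

Lemma alpha_coint (K : fieldType) n (A : hopf_data K n) (mu : 'cV[K]_n) e :
  is_hopf A -> is_right_integral A mu -> is_right_cointegral A e -> ev mu e = 1 ->
  forall x, hmul A x e = ev mu (hmul A x e) *: e.
Proof.
move=> H Hmu He He1 x; apply: (coint_unique H Hmu He He1) => h.
by rewrite (h_assoc H) He hmulZr.
Qed.

Lemma alpha_mul (K : fieldType) n (A : hopf_data K n) (mu : 'cV[K]_n) e :
  is_hopf A -> is_right_integral A mu -> is_right_cointegral A e -> ev mu e = 1 ->
  let alpha := \col_i ev mu (hmul A (bvec K i) e) in
  forall x y, ev alpha (hmul A x y) = ev alpha x * ev alpha y.
Proof.
move=> H Hmu He He1 alpha x y; rewrite /alpha !evalpha (h_assoc H).
by rewrite [hmul A y e in LHS](alpha_coint H Hmu He He1) hmulZr evZ mulrC.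
Qed.

Lemma alpha1 (K : fieldType) n (A : hopf_data K n) (mu : 'cV[K]_n) e :
  is_hopf A -> ev mu e = 1 ->
  ev (\col_i ev mu (hmul A (bvec K i) e)) (hu A) = 1.
Proof. by move=> H He1; rewrite evalpha (h_unitl H). Qed.

Lemma Se_form (K : fieldType) n (A : hopf_data K n) (mu : 'cV[K]_n) e :
  is_hopf A -> is_right_integral A mu -> is_right_cointegral A e -> ev mu e = 1 ->
  hanti A e = contr_l (\col_i ev mu (hmul A (bvec K i) e)) (hcomul A e).
Proof.
move=> H Hmu He He1; rewrite (Sform H Hmu He He1); apply: eq_bigr => j _.
by apply: eq_bigr => k _; rewrite evalpha.
Qed.

Lemma key8 (K : fieldType) n (A : hopf_data K n) (mu : 'cV[K]_n) e :
  is_hopf A -> is_right_integral A mu -> is_right_cointegral A e -> ev mu e = 1 ->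
  let alpha := \col_i ev mu (hmul A (bvec K i) e) in
  forall x, hmul A (contr_l alpha (hcomul A x)) (hanti A e) = ev alpha x *: hanti A e.
Proof.
move=> H Hmu He He1 alpha x; rewrite (Se_form H Hmu He He1) -/alpha.
rewrite -contr_lZ -hcomulZ /alpha evalpha -(alpha_coint H Hmu He He1).
rewrite (h_Dmul H) contr_l_tmul -/alpha.
rewrite /contr_l hmul_suml; apply: eq_bigr => a _.
rewrite hmul_suml; apply: eq_bigr => c _.
rewrite hmulZl hmul_sumr scaler_sumr; apply: eq_bigr => d _.
rewrite hmul_sumr scaler_sumr; apply: eq_bigr => f _.
rewrite hmulZr hmul_bb !scalerA; congr (_ *: _).
rewrite -hmul_bb (alpha_mul H Hmu He He1) -/alpha.
by rewrite mulrACA.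
Qed.

Lemma key10 (K : fieldType) n (A : hopf_data K n) (mu : 'cV[K]_n) e :
  is_hopf A -> is_right_integral A mu -> is_right_cointegral A e -> ev mu e = 1 ->
  forall y, hmul A y (hanti A e) = hcounit A y *: hanti A e.
Proof.
move=> H Hmu He He1 y.
pose alpha := \col_i ev mu (hmul A (bvec K i) e).
pose beta := \col_i ev alpha (hanti A (bvec K i)).
pose x := contr_l beta (hcomul A y).
have amul : forall x y, ev alpha (hmul A x y) = ev alpha x * ev alpha y :=
  alpha_mul H Hmu He He1.
have a1 : ev alpha (hu A) = 1 := alpha1 H He1.
have Hb : forall j, ev beta (bvec K j) = ev alpha (hanti A (bvec K j)).
  by move=> j; rewrite ev_col mxE.
have Hii : ev alpha x = hcounit A y.
  rewrite /x /contr_l ev_sum.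
  transitivity (ev alpha (hcounit A y *: hu A)); last by rewrite evZ a1 mulr1.
  rewrite -(h_antiL H y) ev_sum; apply: eq_bigr => j _.
  rewrite ev_sum [RHS]ev_sum; apply: eq_bigr => k _.
  by rewrite !evZ amul Hb mulrA.
have Hi : contr_l alpha (hcomul A x) = y.
  have -> : x = \sum_j \sum_k (hcomul A y j k * ev beta (bvec K j)) *: bvec K k by [].
  rewrite hcomul_sum contr_l_sum.
  transitivity (\sum_j \sum_k \sum_a \sum_c
     ((hcomul A y j k * ev beta (bvec K j)) * (hD A k a c * ev alpha (bvec K a)))
       *: bvec K c).
    apply: eq_bigr => j _; rewrite hcomul_sum contr_l_sum; apply: eq_bigr => k _.
    rewrite hcomulZ hcomul_b contr_lZ /contr_l scaler_sumr; apply: eq_bigr => a _.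
    by rewrite scaler_sumr; apply: eq_bigr => c _; rewrite scalerA.
  ex1; ex2.
  transitivity (\sum_j \sum_a \sum_c (\sum_k hcomul A y j k * hD A k a c) *:
     ((ev beta (bvec K j) * ev alpha (bvec K a)) *: bvec K c)).
    apply: eq_bigr => j _; apply: eq_bigr => a _; apply: eq_bigr => c _.
    rewrite scaler_suml; apply: eq_bigr => k _; rewrite scalerA; congr (_ *: _).
    by rewrite mulrACA.
  under [LHS]eq_bigr => j _ do under eq_bigr => a _ do under eq_bigr => c _ do
    rewrite -(h_coassoc H) scaler_suml.
  ex2; ex1; ex0; ex2; ex1.
  rewrite -[RHS](h_counitL H y); apply: eq_bigr => k _; apply: eq_bigr => c _.
  under eq_bigr do under eq_bigr do rewrite scalerA.
  under eq_bigr do rewrite -scaler_suml. rewrite -scaler_suml; congr (_ *: _).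
  under eq_bigr do under eq_bigr do rewrite -mulrA.
  under eq_bigr do rewrite -mulr_sumr. rewrite -mulr_sumr; congr (_ * _).
  transitivity (ev alpha (heps A k *: hu A)); last by rewrite evZ a1 mulr1.
  rewrite -hcounit_b -(h_antiL H) ev_sum; apply: eq_bigr => j _.
  rewrite ev_sum; apply: eq_bigr => a _.
  by rewrite evZ amul Hb hcomul_b.
have := key8 H Hmu He He1 x; rewrite -/alpha Hi Hii; done.
Qed.

Theorem lemma5p2 (K : fieldType) (n : nat) (A : hopf_data K n)
    (muR : 'cV[K]_n) (eR : 'rV[K]_n) :
  is_hopf A -> is_right_integral A muR -> is_right_cointegral A eR ->
  ev muR eR = 1 ->
  let a : 'rV[K]_n := contr_r muR (hcomul A eR) in
  let alpha : 'cV[K]_n := \col_i ev muR (hmul A (bvec K i) eR) in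
  let q : K := ev alpha a in
  let eL : 'rV[K]_n := hantiinv A eR in
  let muL : 'rV[K]_n -> K := fun x => ev muR (hanti A x) in
  hanti A eR = q *: eL /\ muL eR = q.
Proof.
move=> H Hmu He He1 a alpha q eL muL.
have U : hS A \in unitmx.
  by apply: (S_unit (w := eR) H Hmu); rewrite He1 oner_neq0.
have SSe : hanti A (hanti A eR) = ev muR (hanti A eR) *: eR.
  rewrite (Sform H Hmu He He1 (hanti A eR)).
  rewrite -[X in _ = _ *: X](h_counitL H eR) scaler_sumr; apply: eq_bigr => j _.
  rewrite scaler_sumr; apply: eq_bigr => k _.
  by rewrite (key10 H Hmu He He1) evZ hcounit_b scalerA mulrA mulrC.
have Hq : ev muR (hanti A eR) = q.
  rewrite (Se_form H Hmu He He1) -/alpha /q /a /contr_r /contr_l ev_sum ev_sum.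
  apply: eq_bigr => j _; rewrite ev_sum ev_sum; apply: eq_bigr => k _.
  by rewrite !evZ mulrAC.
split; last by [].
apply: (can_inj (mulmxK U)).
rewrite /eL /hantiinv -scalemxAl mulmxKV // -/(hanti A (hanti A eR)) SSe Hq.
by [].
Qed.
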